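(* If two NFAs $\mathcal{A}_1$ and $\mathcal{A}_2$ over a finite alphabet $A$ both admit a $(\vec u,\vec B)$-path for the same factorization pattern $(\vec u,\vec B)$, then $L(\mathcal{A}_1)$ and $L(\mathcal{A}_2)$ are not PT-separable.
   Context: Piecewise testable (PT) languages over $A$ are finite Boolean combinations of languages $A^*a_1A^*\cdots A^*a_nA^*$ ($a_i\in A$); $L_1,L_2$ are PT-separable if some PT language $L$ satisfies $L_1\subseteq L$ and $L\cap L_2=\varnothing$. For states $p,q$ and $B\subseteq A$: $p\xrightarrow{\subseteq B}q$ denotes a path (possibly empty) from $p$ to $q$ with all transition labels in $B$; $p\xrightarrow{=B}q$ denotes such a path in which every letter of $B$ occurs. A factorization pattern is $(\vec u,\vec B)$ with $\vec u=(u_0,\dots,u_p)\in (A^* )^{p+1}$ and $\vec B=(B_1,\dots,B_p)$ nonempty subsets of $A$. A $(\vec u,\vec B)$-path is a path from an initial to a final state of the form $s_0\xrightarrow{u_0}p_1\xrightarrow{\subseteq B_1}q_1\xrightarrow{=B_1}q_1\xrightarrow{\subseteq B_1}r_1\xrightarrow{u_1}\cdots\xrightarrow{u_{p-1}}p_p\xrightarrow{\subseteq B_p}q_p\xrightarrow{=B_p}q_p\xrightarrow{\subseteq B_p}r_p\xrightarrow{u_p}f$. *)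

(* Defs.v *)
From mathcomp Require Import all_boot.
Set Implicit Arguments. Unset Strict Implicit. Unset Printing Implicit Defensive.

Record nfa (A : finType) := NFA {
  state : finType;
  init : {set state};
  final : {set state};
  trans : state -> A -> state -> bool
}.

Section NFA.
Variables (A : finType) (N : nfa A).

Fixpoint run (p : state N) (w : seq A) (q : state N) : bool :=
  match w with
  | [::] => p == q
  | a :: w' => [exists r, trans p a r && run r w' q]
  end.

Definition sub_path (p : state N) (B : {set A}) (q : state N) : Prop :=
  exists w : seq A, all (fun a => a \in B) w /\ run p w q.

Definition eq_path (p : state N) (B : {set A}) (q : state N) : Prop :=
  exists w : seq A, [/\ all (fun a => a \in B) w,
                        all (fun a => a \in w) (enum B) & run p w q].

(* Remaining part of a (u,B)-path from state x = p_i, where steps lists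
   (B_i, u_i), ..., (B_p, u_p). *)
Fixpoint pattern_tail (x : state N) (steps : seq ({set A} * seq A)) : Prop :=
  match steps with
  | [::] => x \in final N
  | (B, u) :: steps' =>
      exists (q r t : state N),
        [/\ sub_path x B q, eq_path q B q, sub_path q B r, run r u t
          & pattern_tail t steps']
  end.

(* A (u,B)-path for the pattern u = (u0, u1, ..., up), B = (B1, ..., Bp),
   encoded as u0 and steps = [:: (B1,u1); ...; (Bp,up)]. *)
Definition pattern_path (u0 : seq A) (steps : seq ({set A} * seq A)) : Prop :=
  exists s0 p1 : state N, [/\ s0 \in init N, run s0 u0 p1 & pattern_tail p1 steps].

Definition lang (w : seq A) : Prop :=
  exists s f : state N, [/\ s \in init N, f \in final N & run s w f].

End NFA.

Definition valid_pattern (A : finType) (steps : seq ({set A} * seq A)) : Prop :=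
  all (fun st => st.1 != set0) steps.

(* Boolean combinations of languages A^* a1 A^* ... A^* an A^* *)
Inductive pt_expr (A : finType) :=
| PTatom of seq A
| PTnot of pt_expr A
| PTand of pt_expr A & pt_expr A
| PTor of pt_expr A & pt_expr A.

Fixpoint pt_eval (A : finType) (e : pt_expr A) (w : seq A) : bool :=
  match e with
  | PTatom s => subseq s w
  | PTnot e1 => ~~ pt_eval e1 w
  | PTand e1 e2 => pt_eval e1 w && pt_eval e2 w
  | PTor e1 e2 => pt_eval e1 w || pt_eval e2 w
  end.

Definition PT_separable (A : finType) (L1 L2 : seq A -> Prop) : Prop :=
  exists e : pt_expr A,
    (forall w, L1 w -> pt_eval e w) /\ (forall w, L2 w -> ~~ pt_eval e w).

(* Main.v *)
Require Import Defs.
From mathcomp Require Import all_boot.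

Section Aux.
Variable A : finType.

Lemma subseq_cat_split (s a b : seq A) : subseq s (a ++ b) ->
  exists s1 s2, [/\ s = s1 ++ s2, subseq s1 a & subseq s2 b].
Proof.
elim: a s => [|x a IH] s /=.
  by move=> h; exists [::], s; split => //; apply: sub0seq.
case: s => [|y s] /=.
  by move=> _; exists [::], [::]; split => //; apply: sub0seq.
case: eqP => [->|_] h.
  have [s1 [s2 [-> h1 h2]]] := IH _ h.
  by exists (x :: s1), s2; split => //=; rewrite eqxx.
have [s1 [s2 [e h1 h2]]] := IH _ h.
exists s1, s2; split => //.
change (subseq s1 (x :: a)).
apply: subseq_trans; first exact: h1.
exact: subseq_cons.
Qed.

Definition En (n : nat) (w w' : seq A) :=
  forall s, size s <= n -> subseq s w = subseq s w'.

Lemma En_cat n a a' b b' : En n a a' -> En n b b' -> En n (a ++ b) (a' ++ b').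
Proof.
move=> ha hb.
have key : forall a a' b b', En n a a' -> En n b b' -> forall s, size s <= n ->
    subseq s (a ++ b) -> subseq s (a' ++ b').
  move=> c c' d d' hc hd s hs /subseq_cat_split [s1 [s2 [e h1 h2]]].
  rewrite e in hs; rewrite size_cat in hs.
  have hs1 : size s1 <= n by apply: leq_trans hs; apply: leq_addr.
  have hs2 : size s2 <= n by apply: leq_trans hs; apply: leq_addl.
  by rewrite e; apply: cat_subseq; [rewrite -hc | rewrite -hd].
move=> s hs; apply/idP/idP; first exact: key.
by apply: key => // t ht; [rewrite ha | rewrite hb].
Qed.

Lemma En_refl n w : En n w w. Proof. by []. Qed.

Lemma flatten_sub (B : {set A}) z : all (fun a => a \in z) (enum B) ->
  forall s k, all (fun a => a \in B) s -> size s <= k ->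
  subseq s (flatten (nseq k z)).
Proof.
move=> hz; elim=> [|y s IH] k; first by move=> *; apply: sub0seq.
case: k => [|k] //= /andP [hy hs] hk.
rewrite -cat1s; apply: cat_subseq; last exact: IH.
rewrite sub1seq; move/allP: hz; apply; by rewrite mem_enum.
Qed.

Lemma block_En (B : {set A}) n x z y x' z' y' :
  all (fun a => a \in B) x -> all (fun a => a \in B) z -> all (fun a => a \in B) y ->
  all (fun a => a \in z) (enum B) ->
  all (fun a => a \in B) x' -> all (fun a => a \in B) z' -> all (fun a => a \in B) y' ->
  all (fun a => a \in z') (enum B) ->
  En n (x ++ flatten (nseq n z) ++ y) (x' ++ flatten (nseq n z') ++ y').
Proof.
have ch : forall x z y, all (fun a => a \in B) x -> all (fun a => a \in B) z ->
    all (fun a => a \in B) y -> all (fun a => a \in z) (enum B) ->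
    forall s, size s <= n -> subseq s (x ++ flatten (nseq n z) ++ y) = all (fun a => a \in B) s.
  move=> x1 z1 y1 hx hz hy hzB s hs; apply/idP/idP.
    move=> /mem_subseq hsub; apply/allP => a /hsub.
    rewrite !mem_cat => /or3P [h|h|h].
    - by move/allP: hx; apply.
    - move: h; case/flattenP => t /nseqP [-> _] ht.
      by move/allP: hz; apply.
    - by move/allP: hy; apply.
  move=> hsB; apply: subseq_trans; first exact: (@flatten_sub B z1 hzB s n hsB hs).
  apply: subseq_trans; first exact: (prefix_subseq _ y1).
  exact: suffix_subseq.
move=> hx hz hy hzB hx' hz' hy' hzB' s hs.
by rewrite (ch x z y) // (ch x' z' y').
Qed.

Fixpoint maxlen (e : pt_expr A) : nat :=
  match e with
  | PTatom s => size s
  | PTnot e1 => maxlen e1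
  | PTand e1 e2 => maxn (maxlen e1) (maxlen e2)
  | PTor e1 e2 => maxn (maxlen e1) (maxlen e2)
  end.

Lemma En_eval n w w' e : En n w w' -> maxlen e <= n -> pt_eval e w = pt_eval e w'.
Proof.
move=> h; elim: e => [s|e1 IH|e1 IH1 e2 IH2|e1 IH1 e2 IH2] /=.
- by move=> hs; apply: h.
- by move=> hm; rewrite IH.
- by rewrite geq_max => /andP [h1 h2]; rewrite IH1 ?IH2.
- by rewrite geq_max => /andP [h1 h2]; rewrite IH1 ?IH2.
Qed.

Lemma run_cat (N : nfa A) (p r q : state N) w w' : run p w r -> run r w' q -> run p (w ++ w') q.
Proof.
elim: w p => [|a w IH] p /=; first by move/eqP ->.
case/existsP => t /andP [ht hr] h2; apply/existsP; exists t.
by rewrite ht (IH _ hr h2).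
Qed.

Lemma run_pow (N : nfa A) (q : state N) z k : run q z q -> run q (flatten (nseq k z)) q.
Proof.
move=> h; elim: k => [|k IH] /=; first by [].
exact: run_cat h IH.
Qed.

Arguments run_cat {N p r q w w'}.
Arguments run_pow {N q z} k.

Lemma tail_words (N1 N2 : nfa A) n steps : forall (x1 : state N1) (x2 : state N2),
  pattern_tail x1 steps -> pattern_tail x2 steps ->
  exists w1 w2, [/\ exists f1, f1 \in final N1 /\ run x1 w1 f1,
                    exists f2, f2 \in final N2 /\ run x2 w2 f2 & En n w1 w2].
Proof.
elim: steps => [|[B u] st IH] x1 x2 /=.
  move=> h1 h2; exists [::], [::]; split; [exists x1 | exists x2 | by []]; by rewrite /= eqxx.
move=> [q1 [r1 [t1 [[a1 [ha1 ra1]] [z1 [hz1 hzB1 rz1]] [b1 [hb1 rb1]] hu1 ht1]]]].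
move=> [q2 [r2 [t2 [[a2 [ha2 ra2]] [z2 [hz2 hzB2 rz2]] [b2 [hb2 rb2]] hu2 ht2]]]].
have [w1 [w2 [[f1 [hf1 rf1]] [f2 [hf2 rf2]] hE]]] := IH _ _ ht1 ht2.
exists ((a1 ++ flatten (nseq n z1) ++ b1) ++ u ++ w1),
       ((a2 ++ flatten (nseq n z2) ++ b2) ++ u ++ w2); split.
- exists f1; split => //.
  apply: run_cat (run_cat ra1 (run_cat (run_pow n rz1) rb1)) (run_cat hu1 rf1).
- exists f2; split => //.
  apply: run_cat (run_cat ra2 (run_cat (run_pow n rz2) rb2)) (run_cat hu2 rf2).
- apply: En_cat; first exact: (@block_En B n _ _ _ _ _ _ ha1 hz1 hb1 hzB1 ha2 hz2 hb2 hzB2).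
  exact: En_cat.
Qed.

End Aux.
Arguments maxlen {A} e.
Arguments En_refl {A} n w.
Arguments En {A} n w w'.

Theorem lemma2 (A : finType) (N1 N2 : nfa A)
    (u0 : seq A) (steps : seq ({set A} * seq A)) :
  valid_pattern steps ->
  pattern_path N1 u0 steps ->
  pattern_path N2 u0 steps ->
  ~ PT_separable (lang N1) (lang N2).
Proof.
move=> _ [s1 [p1 [hs1 r1 ht1]]] [s2 [p2 [hs2 r2 ht2]]] [e [he1 he2]].
have [w1 [w2 [[f1 [hf1 rf1]] [f2 [hf2 rf2]] hE]]] := @tail_words A N1 N2 (maxlen e) steps p1 p2 ht1 ht2.
have L1 : lang N1 (u0 ++ w1) by exists s1, f1; split => //; exact: run_cat r1 rf1.
have L2 : lang N2 (u0 ++ w2) by exists s2, f2; split => //; exact: run_cat r2 rf2.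
have := he1 _ L1; have := he2 _ L2.
rewrite (@En_eval A (maxlen e) _ _ e (@En_cat A (maxlen e) _ _ _ _ (En_refl (maxlen e) u0) hE) (leqnn _)).
by move/negbTE ->.
Qed.
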